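(* Let $h>0$, $K>0$, $g\in C^1(\mathbb{R}_+,\mathbb{R}_+)$ with $g(0)=0$, $g(K)=K$ and $g'(0+)=p>1$, and let $\psi$ be a nonnegative solution of $x'(t)=-x(t)+g(x(t-h))$ on $\mathbb{R}$ with $\psi(-\infty)=0$, $\psi(+\infty)=K$. Let $\lambda$ be the positive root of $z=-1+pe^{-zh}$. If the finite limit $g''(0+)$ exists, then for each $\delta>0$ there is $t_0\in\mathbb{R}$ such that, as $t\to-\infty$, $$\psi(t-t_0)=e^{\lambda t}+O(e^{(2\lambda-\delta)t}),\qquad \psi'(t-t_0)=\lambda e^{\lambda t}+O(e^{(2\lambda-\delta)t}),$$ and hence $\psi'>0$ on some semi-axis $(-\infty,T]$. Moreover, if $g''$ exists and is bounded on $[0,\epsilon)$ for some $\epsilon>0$, then such a solution $\psi$ is unique up to a translation in $t$. *)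

(* Defs.v *)
From Stdlib Require Import Reals.
From Coquelicot Require Import Coquelicot.
Open Scope R_scope.

(* g is C^1 on R_+ = [0,+oo) with derivative dg (one-sided at 0) and maps
   R_+ into R_+.  Values of g on (-oo,0) are irrelevant. *)
Definition C1_Rplus_Rplus (g dg : R -> R) : Prop :=
  (forall x, 0 < x -> is_derive g x (dg x)) /\
  (forall x, 0 < x -> continuous dg x) /\
  filterlim (fun x => (g x - g 0) / x) (at_right 0) (locally (dg 0)) /\
  filterlim dg (at_right 0) (locally (dg 0)) /\
  (forall x, 0 <= x -> 0 <= g x).

Definition is_solution (h : R) (g psi : R -> R) : Prop :=
  forall t, is_derive psi t (- psi t + g (psi (t - h))).

Definition is_front (h K : R) (g psi : R -> R) : Prop :=
  is_solution h g psi /\ (forall t, 0 <= psi t) /\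
  is_lim psi m_infty 0 /\ is_lim psi p_infty K.

(* Main.v *)
Require Import Defs.
From Stdlib Require Import Reals Lra ZArith Lia.
From Coquelicot Require Import Coquelicot.
Open Scope R_scope.

Lemma cont_of_derive f x l : is_derive f x l -> continuity_pt f x.
Proof.
  intro H. apply continuity_pt_filterlim.
  apply (ex_derive_continuous (K:=R_AbsRing) (V:=R_NormedModule)). exists l; exact H.
Qed.

Lemma mono_dec (f df : R -> R) a b : a <= b ->
  (forall x, a <= x <= b -> is_derive f x (df x)) ->
  (forall x, a <= x <= b -> df x <= 0) -> f b <= f a.
Proof.
  intros Hab Hd Hs.
  destruct (MVT_gen f a b df) as [c [Hc Hfc]].
  - intros x Hx. rewrite Rmin_left in Hx by lra. rewrite Rmax_right in Hx by lra. apply Hd; lra.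
  - intros x Hx. rewrite Rmin_left in Hx by lra. rewrite Rmax_right in Hx by lra.
    apply (cont_of_derive f x (df x)), Hd; lra.
  - rewrite Rmin_left in Hc by lra. rewrite Rmax_right in Hc by lra.
    assert (df c <= 0) by (apply Hs; lra).
    assert (df c * (b - a) <= 0) by (apply Rmult_le_0_r; lra). lra.
Qed.

Lemma mono_inc (f df : R -> R) a b : a <= b ->
  (forall x, a <= x <= b -> is_derive f x (df x)) ->
  (forall x, a <= x <= b -> 0 <= df x) -> f a <= f b.
Proof.
  intros Hab Hd Hs.
  assert (- f b <= - f a); [|lra].
  apply (mono_dec (fun x => - f x) (fun x => - df x)); auto.
  - intros x Hx. apply (is_derive_opp f x (df x)). auto.
  - intros x Hx. specialize (Hs x Hx). lra.
Qed.

Lemma RInt_window_derive (u : R -> R) h t :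
  (forall x, continuous u x) ->
  is_derive (fun s => RInt u (s - h) s) t (u t - u (t - h)).
Proof.
  intros Hc.
  assert (Hex : forall a b, ex_RInt u a b).
  { intros a b. apply (ex_RInt_continuous (V:=R_CompleteNormedModule)). intros; auto. }
  assert (HI : forall x, is_derive (RInt u 0) x (u x)).
  { intros x. apply is_derive_RInt with 0.
    apply filter_forall. intros y. apply RInt_correct. auto. auto. }
  apply is_derive_ext with (fun s => RInt u 0 s - RInt u 0 (s - h)).
  { intros s. assert (E := RInt_Chasles u 0 (s - h) s (Hex _ _) (Hex _ _)).
    rewrite <- E. unfold plus; simpl. ring. }
  apply (is_derive_minus (fun s => RInt u 0 s) (fun s => RInt u 0 (s - h)) t (u t) (u (t-h))). apply HI.
  replace (u (t - h)) with (1 * u (t - h)) by ring.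
  apply (is_derive_comp (RInt u 0) (fun s => s - h)).
  apply HI. auto_derive; auto; ring.
Qed.

Lemma u_derive (h mu : R) (g psi : R -> R) t :
  (forall t, is_derive psi t (- psi t + g (psi (t - h)))) ->
  is_derive (fun s => psi s * exp (- mu * s)) t
    (- (1 + mu) * (psi t * exp (- mu * t)) + exp (- mu * t) * g (psi (t - h))).
Proof.
  intros Hs.
  assert (E := is_derive_unique _ _ _ (Hs t)).
  auto_derive.
  - eexists; apply Hs.
  - change (Derive (fun x : R => psi x) t) with (Derive psi t). rewrite E. ring.
Qed.

Lemma is_derive_val (f : R -> R) (x l l' : R) : is_derive f x l -> l = l' -> is_derive f x l'.
Proof. intros H E; subst; auto. Qed.

Definition uw (mu : R) (psi : R -> R) := fun s => psi s * exp (- mu * s).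
Definition Gw (h mu : R) (psi : R -> R) :=
  fun t => uw mu psi t + (1 + mu) * RInt (uw mu psi) (t - h) t.

Lemma uw_cont h mu g psi x :
  (forall t, is_derive psi t (- psi t + g (psi (t - h)))) -> continuous (uw mu psi) x.
Proof.
  intros Hs. apply (ex_derive_continuous (K:=R_AbsRing) (V:=R_NormedModule)).
  eexists. apply (u_derive h mu g psi x Hs).
Qed.

Lemma G_derive h mu g psi t :
  (forall t, is_derive psi t (- psi t + g (psi (t - h)))) ->
  is_derive (Gw h mu psi) t
    (exp (- mu * t) * (g (psi (t - h)) - (1 + mu) * exp (mu * h) * psi (t - h))).
Proof.
  intros Hs.
  assert (H1 := u_derive h mu g psi t Hs).
  assert (H2 := RInt_window_derive (uw mu psi) h t (fun x => uw_cont h mu g psi x Hs)).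
  assert (H3 := is_derive_scal (fun s => RInt (uw mu psi) (s - h) s) t (1 + mu) _ H2).
  assert (H4 := is_derive_plus (uw mu psi) (fun s => scal (1 + mu) (RInt (uw mu psi) (s - h) s)) t _ _ H1 H3).
  unfold Gw. eapply is_derive_val; [eapply is_derive_ext; [|exact H4]|].
  - intros s. reflexivity.
  - unfold plus, scal, uw; simpl. unfold mult; simpl.
    replace (- mu * (t - h)) with (- mu * t + mu * h) by ring.
    rewrite exp_plus. ring.
Qed.

Lemma at_right_lim (f : R -> R) l :
  filterlim f (at_right 0) (locally l) ->
  forall eta, 0 < eta -> exists d, 0 < d /\ forall x, 0 < x < d -> Rabs (f x - l) < eta.
Proof.
  intros H eta He.
  destruct (proj1 (filterlim_locally f l) H (mkposreal eta He)) as [d Hd].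
  exists d. split. apply cond_pos.
  intros x Hx. apply (Hd x).
  - change (Rabs (x - 0) < d). rewrite Rminus_0_r, Rabs_pos_eq; lra.
  - lra.
Qed.

Lemma g_quot (g : R -> R) p :
  filterlim (fun x => (g x - g 0) / x) (at_right 0) (locally p) -> g 0 = 0 ->
  forall eta, 0 < eta -> exists d, 0 < d /\
    forall x, 0 <= x < d -> (p - eta) * x <= g x <= (p + eta) * x.
Proof.
  intros H g0 eta He.
  destruct (at_right_lim _ _ H eta He) as [d [Hd Hx]].
  exists d. split; auto. intros x [Hx0 Hxd].
  destruct (Req_dec x 0) as [->|Hn].
  { rewrite g0. lra. }
  specialize (Hx x ltac:(lra)). rewrite g0, Rminus_0_r in Hx.
  apply Rabs_lt_between in Hx.
  assert (E : g x = (g x / x) * x) by (field; auto).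
  rewrite E. split; apply Rmult_le_compat_r; lra.
Qed.

Lemma g_lip (g dg : R -> R) p :
  (forall x, 0 < x -> is_derive g x (dg x)) ->
  filterlim (fun x => (g x - g 0) / x) (at_right 0) (locally p) -> g 0 = 0 ->
  filterlim dg (at_right 0) (locally p) -> 0 <= p ->
  forall eta, 0 < eta -> exists d, 0 < d /\
    forall a b, 0 <= a < d -> 0 <= b < d -> Rabs (g a - g b) <= (p + eta) * Rabs (a - b).
Proof.
  intros Hd Hq g0 Hdg Hp eta He.
  destruct (g_quot g p Hq g0 eta He) as [d1 [Hd1 H1]].
  destruct (at_right_lim _ _ Hdg eta He) as [d2 [Hd2 H2]].
  exists (Rmin d1 d2). split. apply Rmin_pos; auto.
  assert (Hm1 := Rmin_l d1 d2). assert (Hm2 := Rmin_r d1 d2).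
  assert (K : forall a b, 0 <= a <= b -> b < Rmin d1 d2 -> Rabs (g a - g b) <= (p + eta) * Rabs (a - b)).
  { intros a b Hab Hb.
    destruct (Req_dec a 0) as [->|Ha].
    - rewrite g0. destruct (H1 b ltac:(lra)).
      replace (0 - g b) with (- g b) by ring. replace (0 - b) with (- b) by ring.
      rewrite !Rabs_Ropp, (Rabs_pos_eq b) by lra. apply Rabs_le; nra.
    - destruct (MVT_gen g a b dg) as [c [Hc Hfc]].
      + intros x Hx. rewrite Rmin_left in Hx by lra. rewrite Rmax_right in Hx by lra. apply Hd; lra.
      + intros x Hx. rewrite Rmin_left in Hx by lra. rewrite Rmax_right in Hx by lra.
        apply (cont_of_derive g x (dg x)), Hd; lra.
      + rewrite Rmin_left in Hc by lra. rewrite Rmax_right in Hc by lra.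
        specialize (H2 c ltac:(lra)). apply Rabs_lt_between in H2.
        rewrite Rabs_minus_sym, Hfc, (Rabs_minus_sym a b), Rabs_mult.
        apply Rmult_le_compat_r. apply Rabs_pos.
        apply Rabs_le; lra. }
  intros a b Ha Hb.
  destruct (Rle_dec a b).
  - apply K; lra.
  - rewrite Rabs_minus_sym, (Rabs_minus_sym a b). apply K; lra.
Qed.

Lemma deriv_aff (f : R -> R) df a b z : is_derive f z df ->
  is_derive (fun z => f z + a * z + b * z ^ 2) z (df + a + 2 * b * z).
Proof.
  intros H. assert (E := is_derive_unique _ _ _ H).
  auto_derive. eexists; eauto.
  change (Derive (fun x : R => f x) z) with (Derive f z). rewrite E. ring.
Qed.

Lemma eps_arg (a b : R) : (forall eta, 0 < eta -> a < b + eta) -> a <= b.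
Proof.
  intros H. destruct (Rle_dec a b); auto.
  specialize (H (a - b) ltac:(lra)). lra.
Qed.

Lemma g_quad (g dg d2 : R -> R) p e M :
  (forall x, 0 < x -> is_derive g x (dg x)) ->
  filterlim (fun x => (g x - g 0) / x) (at_right 0) (locally p) -> g 0 = 0 ->
  filterlim dg (at_right 0) (locally p) -> 0 < e ->
  (forall x, 0 < x < e -> is_derive dg x (d2 x)) ->
  (forall x, 0 < x < e -> Rabs (d2 x) <= M) ->
  exists x0, 0 < x0 /\ forall x, 0 <= x <= x0 -> Rabs (g x - p * x) <= M * x ^ 2.
Proof.
  intros Hg Hq g0 Hdg He Hd2 HM.
  assert (M0 : 0 <= M).
  { specialize (HM (e/2) ltac:(lra)). assert (T := Rabs_pos (d2 (e/2))). lra. }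
  assert (A : forall x, 0 < x < e -> Rabs (dg x - p) <= M * x).
  { intros x Hx.
    assert (B : forall s, 0 < s < x -> Rabs (dg x - dg s) <= M * x).
    { intros s Hs.
      assert (U : dg x + (- M) * x + 0 * x ^ 2 <= dg s + (- M) * s + 0 * s ^ 2).
      { apply (mono_dec (fun z => dg z + (- M) * z + 0 * z ^ 2) (fun z => d2 z + - M + 2 * 0 * z)).
        lra. intros z Hz. apply deriv_aff, Hd2; lra.
        intros z Hz. specialize (HM z ltac:(lra)). apply Rabs_le_between in HM. lra. }
      assert (V : dg s + M * s + 0 * s ^ 2 <= dg x + M * x + 0 * x ^ 2).
      { apply (mono_inc (fun z => dg z + M * z + 0 * z ^ 2) (fun z => d2 z + M + 2 * 0 * z)).
        lra. intros z Hz. apply deriv_aff, Hd2; lra.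
        intros z Hz. specialize (HM z ltac:(lra)). apply Rabs_le_between in HM. lra. }
      apply Rabs_le. nra. }
    apply eps_arg. intros eta Heta.
    destruct (at_right_lim _ _ Hdg eta Heta) as [d [Hd Hs]].
    set (s := Rmin (x/2) (d/2)).
    assert (Hs1 : 0 < s) by (apply Rmin_pos; lra).
    assert (Hs2 : s <= x/2) by apply Rmin_l. assert (Hs3 : s <= d/2) by apply Rmin_r.
    specialize (Hs s ltac:(lra)). specialize (B s ltac:(lra)).
    replace (dg x - p) with ((dg x - dg s) + (dg s - p)) by ring.
    eapply Rle_lt_trans. apply Rabs_triang. lra. }
  exists (e/2). split. lra.
  intros x Hx. destruct (Req_dec x 0) as [->|Hx0].
  { rewrite g0. replace (0 - p * 0) with 0 by ring. rewrite Rabs_R0. nra. }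
  assert (B : forall s, 0 < s < x -> Rabs ((g x - p * x) - (g s - p * s)) <= M * x ^ 2).
  { intros s Hs.
    assert (U : g x + (- p) * x + (- M) * x ^ 2 <= g s + (- p) * s + (- M) * s ^ 2).
    { apply (mono_dec (fun z => g z + (- p) * z + (- M) * z ^ 2) (fun z => dg z + - p + 2 * (- M) * z)).
      lra. intros z Hz. apply deriv_aff, Hg; lra.
      intros z Hz. specialize (A z ltac:(lra)). apply Rabs_le_between in A. nra. }
    assert (V : g s + (- p) * s + M * s ^ 2 <= g x + (- p) * x + M * x ^ 2).
    { apply (mono_inc (fun z => g z + (- p) * z + M * z ^ 2) (fun z => dg z + - p + 2 * M * z)).
      lra. intros z Hz. apply deriv_aff, Hg; lra.
      intros z Hz. specialize (A z ltac:(lra)). apply Rabs_le_between in A. nra. }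
    apply Rabs_le. nra. }
  apply eps_arg. intros eta Heta.
  destruct (g_quot g p Hq g0 1 ltac:(lra)) as [d [Hd Hs]].
  set (s := Rmin (x/2) (Rmin (d/2) (eta / (2 * (Rabs p + 2))))).
  assert (Hp : 0 < Rabs p + 2) by (assert (T := Rabs_pos p); lra).
  assert (Hs1 : 0 < s). { apply Rmin_pos. lra. apply Rmin_pos. lra. apply Rdiv_lt_0_compat; lra. }
  assert (Hs2 : s <= x/2) by apply Rmin_l.
  assert (Hs3 : s <= Rmin (d/2) (eta / (2 * (Rabs p + 2)))) by apply Rmin_r.
  assert (Hs4 : s <= d/2) by (assert (T := Rmin_l (d/2) (eta / (2 * (Rabs p + 2)))); lra).
  assert (Hs5 : s <= eta / (2 * (Rabs p + 2))) by (assert (T := Rmin_r (d/2) (eta / (2 * (Rabs p + 2)))); lra).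
  specialize (Hs s ltac:(lra)). specialize (B s ltac:(lra)).
  assert (C : Rabs (g s - p * s) <= (Rabs p + 1) * s).
  { apply Rabs_le. assert (T := proj1 (Rabs_le_between p (Rabs p)) (Rle_refl _)). nra. }
  assert (D : (Rabs p + 1) * s < eta).
  { apply Rmult_le_compat_l with (r := Rabs p + 2) in Hs5; [|lra].
    replace ((Rabs p + 2) * (eta / (2 * (Rabs p + 2)))) with (eta / 2) in Hs5 by (field; lra). nra. }
  replace (g x - p * x) with ((g x - p * x - (g s - p * s)) + (g s - p * s)) by ring.
  eapply Rle_lt_trans. apply Rabs_triang. lra.
Qed.

Lemma exp_le x y : x <= y -> exp x <= exp y.
Proof. intros H. destruct (Req_dec x y) as [->|]. lra. apply Rlt_le, exp_increasing; lra. Qed.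

Lemma exp_small (S eta t : R) : 0 <= S -> 0 < eta -> 0 < t \/ t <= 0 ->
  forall k, 0 < k -> exists s, s < t /\ S * exp (k * s) < eta.
Proof.
  intros HS He _ k Hk.
  set (s := Rmin (t - 1) (ln (eta / (S + 1)) / k)).
  exists s. split. { assert (T := Rmin_l (t-1) (ln (eta / (S + 1)) / k)). unfold s; lra. }
  assert (T := Rmin_r (t-1) (ln (eta / (S + 1)) / k)). fold s in T.
  assert (E : exp (k * s) <= eta / (S + 1)).
  { rewrite <- (exp_ln (eta / (S + 1))) by (apply Rdiv_lt_0_compat; lra).
    apply exp_le. apply Rmult_le_compat_l with (r := k) in T; [|lra].
    replace (k * (ln (eta / (S + 1)) / k)) with (ln (eta / (S + 1))) in T by (field; lra). lra. }
  assert (E2 : S * exp (k * s) <= S * (eta / (S + 1))) by (apply Rmult_le_compat_l; lra).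
  assert (E3 : S * (eta / (S + 1)) < eta).
  { apply Rmult_lt_reg_r with (S + 1). lra.
    replace (S * (eta / (S + 1)) * (S + 1)) with (S * eta) by (field; lra). nra. }
  lra.
Qed.

Lemma small_step1 (w q : R -> R) h nu P S T : 0 < h -> 0 < nu -> 0 <= P ->
  (forall t, t <= T -> is_derive w t (- w t + q t)) ->
  (forall t, t <= T -> q t <= P * Rabs (w (t - h))) ->
  (forall t, t <= T -> Rabs (w t) <= S * exp (nu * t)) ->
  forall t, t <= T -> w t <= P * exp (- nu * h) / (1 + nu) * S * exp (nu * t).
Proof.
  intros Hh Hnu HP Hd Hq Hb t Ht.
  assert (HS : 0 <= S).
  { specialize (Hb t Ht). assert (T1 := Rabs_pos (w t)). assert (T2 := exp_pos (nu * t)).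
    destruct (Rle_dec 0 S); auto. nra. }
  set (th := P * exp (- nu * h) / (1 + nu)).
  assert (Hth : 0 <= th) by (unfold th; apply Rmult_le_pos; [apply Rmult_le_pos; [lra|apply Rlt_le, exp_pos]| apply Rlt_le, Rinv_0_lt_compat; lra]).
  set (phi := fun s => exp s * w s - th * S * exp ((1 + nu) * s)).
  assert (Hmono : forall s, s <= t -> phi t <= phi s).
  { intros s Hs.
    apply (mono_dec phi (fun x => exp x * q x - P * exp (- nu * h) * S * exp ((1 + nu) * x))); auto.
    - intros x Hx. unfold phi. assert (E := is_derive_unique _ _ _ (Hd x ltac:(lra))).
      auto_derive. eexists; apply (Hd x); lra.
      change (Derive (fun x : R => w x) x) with (Derive w x). rewrite E.
      unfold th. field. lra.
    - intros x Hx. simpl.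
      assert (Q := Hq x ltac:(lra)). assert (B := Hb (x - h) ltac:(lra)).
      assert (Q2 : q x <= P * (S * exp (nu * (x - h)))) by (eapply Rle_trans; [exact Q|]; apply Rmult_le_compat_l; auto).
      assert (E : exp x * exp (nu * (x - h)) = exp (- nu * h) * exp ((1 + nu) * x)).
      { rewrite <- !exp_plus. f_equal. ring. }
      assert (exp x * q x <= exp x * (P * (S * exp (nu * (x - h))))) by (apply Rmult_le_compat_l; [apply Rlt_le, exp_pos|auto]).
      replace (exp x * (P * (S * exp (nu * (x - h))))) with (P * exp (- nu * h) * S * exp ((1 + nu) * x)) in H by (transitivity (P * S * (exp (- nu * h) * exp ((1 + nu) * x))); [ring| rewrite <- E; ring]). lra. }
  assert (Hphi : phi t <= 0).
  { apply eps_arg. intros eta He. rewrite Rplus_0_l.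
    destruct (exp_small S eta t HS He (Rlt_or_le 0 t) (1 + nu) ltac:(lra)) as [s [Hs1 Hs2]].
    eapply Rle_lt_trans. apply (Hmono s); lra.
    unfold phi.
    assert (B := Hb s ltac:(lra)).
    assert (E : exp s * exp (nu * s) = exp ((1 + nu) * s)) by (rewrite <- exp_plus; f_equal; ring).
    assert (exp s * w s <= exp s * Rabs (w s)) by (apply Rmult_le_compat_l; [apply Rlt_le, exp_pos|apply Rle_abs]).
    assert (exp s * Rabs (w s) <= exp s * (S * exp (nu * s))) by (apply Rmult_le_compat_l; [apply Rlt_le, exp_pos|auto]).
    assert (0 <= th * S * exp ((1 + nu) * s)) by (apply Rmult_le_pos; [nra| apply Rlt_le, exp_pos]).
    nra. }
  unfold phi in Hphi.
  assert (E : exp ((1 + nu) * t) = exp t * exp (nu * t)) by (rewrite <- exp_plus; f_equal; ring).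
  rewrite E in Hphi. assert (Et := exp_pos t).
  apply Rmult_le_reg_l with (exp t); auto. fold th. nra.
Qed.

Lemma small_sol (w q : R -> R) h nu P S T : 0 < h -> 0 < nu -> 0 <= P ->
  P * exp (- nu * h) < 1 + nu ->
  (forall t, t <= T -> is_derive w t (- w t + q t)) ->
  (forall t, t <= T -> Rabs (q t) <= P * Rabs (w (t - h))) ->
  (forall t, t <= T -> Rabs (w t) <= S * exp (nu * t)) ->
  forall t, t <= T -> w t = 0.
Proof.
  intros Hh Hnu HP Hth Hd Hq Hb.
  set (th := P * exp (- nu * h) / (1 + nu)).
  assert (Hth0 : 0 <= th) by (unfold th; apply Rmult_le_pos; [apply Rmult_le_pos; [lra|apply Rlt_le, exp_pos]| apply Rlt_le, Rinv_0_lt_compat; lra]).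
  assert (Hth1 : th < 1).
  { unfold th. apply Rmult_lt_reg_r with (1 + nu). lra.
    replace (P * exp (- nu * h) / (1 + nu) * (1 + nu)) with (P * exp (- nu * h)) by (field; lra). lra. }
  assert (It : forall n, forall t, t <= T -> Rabs (w t) <= th ^ n * S * exp (nu * t)).
  { induction n.
    - intros t Ht. simpl. rewrite Rmult_1_l. auto.
    - intros t Ht. apply Rabs_le. split.
      + assert (K := small_step1 (fun s => - w s) (fun s => - q s) h nu P (th ^ n * S) T Hh Hnu HP).
        assert (K' : - w t <= th * (th ^ n * S) * exp (nu * t)).
        { apply K; auto.
          - intros s Hs. apply (is_derive_val _ _ (opp (- w s + q s))). apply (is_derive_opp w s), Hd; auto.
            unfold opp; simpl. ring.
          - intros s Hs. rewrite Rabs_Ropp. assert (A := Rabs_maj2 (q s)). specialize (Hq s Hs). lra.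
          - intros s Hs. rewrite Rabs_Ropp. auto. }
        simpl. nra.
      + assert (K := small_step1 w q h nu P (th ^ n * S) T Hh Hnu HP).
        assert (K' : w t <= th * (th ^ n * S) * exp (nu * t)).
        { apply K; auto.
          intros s Hs. assert (A := Rle_abs (q s)). specialize (Hq s Hs). lra. }
        simpl. nra. }
  intros t Ht.
  apply Rabs_eq_0. apply Rle_antisym; [|apply Rabs_pos].
  apply eps_arg. intros eta He. rewrite Rplus_0_l.
  assert (HS : 0 <= S).
  { specialize (Hb t Ht). assert (T1 := Rabs_pos (w t)). assert (T2 := exp_pos (nu * t)).
    destruct (Rle_dec 0 S); auto. nra. }
  assert (Hc : 0 < S * exp (nu * t) + 1) by (assert (T2 := exp_pos (nu * t)); nra).
  destruct (pow_lt_1_zero th ltac:(rewrite Rabs_pos_eq; lra) (eta / (S * exp (nu * t) + 1)) ltac:(apply Rdiv_lt_0_compat; lra)) as [N HN].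
  specialize (HN N (le_n N)). rewrite Rabs_pos_eq in HN by (apply pow_le; lra).
  eapply Rle_lt_trans. apply (It N t Ht).
  assert (E : th ^ N * (S * exp (nu * t) + 1) < eta).
  { apply Rmult_lt_compat_r with (r := S * exp (nu * t) + 1) in HN; auto.
    replace (eta / (S * exp (nu * t) + 1) * (S * exp (nu * t) + 1)) with eta in HN by (field; lra). lra. }
  assert (0 <= th ^ N) by (apply pow_le; lra).
  nra.
Qed.

Lemma fwd h g y1 y2 T : 0 < h -> is_solution h g y1 -> is_solution h g y2 ->
  (forall t, t <= T -> y1 t = y2 t) -> forall t, y1 t = y2 t.
Proof.
  intros Hh H1 H2 HT.
  assert (I : forall n : nat, forall t, t <= T + INR n * h -> y1 t = y2 t).
  { induction n.
    - simpl. intros t Ht. apply HT. lra.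
    - intros t Ht. rewrite S_INR in Ht.
      destruct (Rle_dec t (T + INR n * h)) as [Hle|Hgt]. auto.
      apply Rnot_le_lt in Hgt.
      set (a := T + INR n * h).
      set (f := fun s => exp s * (y1 s - y2 s)).
      assert (D : forall s, a <= s <= t -> is_derive f s 0).
      { intros s Hs. unfold f.
        assert (E1 := is_derive_unique _ _ _ (H1 s)). assert (E2 := is_derive_unique _ _ _ (H2 s)).
        assert (Ey : y1 (s - h) = y2 (s - h)) by (apply IHn; unfold a in Hs; lra).
        auto_derive. split; [eexists; apply H1|split; [eexists; apply H2| auto]].
        change (Derive (fun x : R => y1 x) s) with (Derive y1 s).
        change (Derive (fun x : R => y2 x) s) with (Derive y2 s).
        rewrite E1, E2, Ey. ring. }
      assert (A1 : f t <= f a) by (apply (mono_dec f (fun _ => 0)); [unfold a; lra|auto|intros; lra]).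
      assert (A2 : f a <= f t) by (apply (mono_inc f (fun _ => 0)); [unfold a; lra|auto|intros; lra]).
      assert (Fa : f a = 0) by (unfold f; rewrite IHn; [ring|unfold a; lra]).
      unfold f in A1, A2, Fa. assert (Et := exp_pos t).
      assert (exp t * (y1 t - y2 t) = 0) by (unfold a in *; lra).
      apply Rmult_integral in H. destruct H; lra. }
  intros t. destruct (archimed ((t - T) / h)) as [Ha _].
  destruct (Rle_dec t T) as [|Hn]. auto. apply Rnot_le_lt in Hn.
  assert (Hz : (0 <= up ((t - T) / h))%Z).
  { apply le_IZR. assert (0 < (t - T) / h) by (apply Rdiv_lt_0_compat; lra). lra. }
  apply (I (Z.to_nat (up ((t - T) / h)))).
  rewrite INR_IZR_INZ, Z2Nat.id by auto.
  apply Rmult_lt_compat_r with (r := h) in Ha; auto.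
  replace ((t - T) / h * h) with (t - T) in Ha by (field; lra). lra.
Qed.

Lemma win_upper (u rho : R -> R) c h A lam T0 a M t : 0 < c -> 0 < h -> 0 <= A -> 0 < lam ->
  (forall t, t <= T0 -> is_derive u t (c * (u (t - h) - u t) + rho t)) ->
  (forall t, t <= T0 -> Rabs (rho t) <= A * exp (lam * t)) ->
  a + h <= T0 ->
  (forall s, a - h <= s <= a -> u s <= M) ->
  a <= t <= a + h ->
  u t <= M - exp (- c * (t - a)) * (M - u a) + A * exp (lam * (a + h)) / c.
Proof.
  intros Hc Hh HA Hl Hd Hr HaT HM Ht.
  set (E := A * exp (lam * (a + h))).
  assert (HE : 0 <= E) by (unfold E; apply Rmult_le_pos; [lra|apply Rlt_le, exp_pos]).
  set (phi := fun s => exp (c * (s - a)) * (u s - M) - E / c * exp (c * (s - a))).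
  assert (P : phi t <= phi a).
  { apply (mono_dec phi (fun s => exp (c * (s - a)) * (c * (u (s - h) - M) + rho s - E))). lra.
    - intros s Hs. unfold phi.
      assert (Es := is_derive_unique _ _ _ (Hd s ltac:(lra))).
      auto_derive. eexists; apply (Hd s); lra.
      change (Derive (fun x : R => u x) s) with (Derive u s). rewrite Es. replace (s + - a) with (s - a) by ring. field. lra.
    - intros s Hs. assert (U := HM (s - h) ltac:(lra)).
      assert (R1 := Hr s ltac:(lra)). assert (R2 := Rle_abs (rho s)).
      assert (R3 : exp (lam * s) <= exp (lam * (a + h))).
      { apply exp_le. apply Rmult_le_compat_l; lra. }
      assert (R5 : A * exp (lam * s) <= A * exp (lam * (a + h))) by (apply Rmult_le_compat_l; lra).
      assert (R4 : rho s <= E) by (unfold E; lra).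
      assert (X : c * (u (s - h) - M) + rho s - E <= 0) by nra.
      assert (0 < exp (c * (s - a))) by apply exp_pos.
      generalize X; generalize (c * (u (s - h) - M) + rho s - E). intros; nra. }
  unfold phi in P. replace (a - a) with 0 in P by ring. rewrite Rmult_0_r, exp_0 in P.
  assert (Ex : exp (c * (t - a)) * exp (- c * (t - a)) = 1) by (rewrite <- exp_plus; replace (c * (t - a) + - c * (t - a)) with 0 by ring; apply exp_0).
  assert (Hp := exp_pos (c * (t - a))). assert (Hq := exp_pos (- c * (t - a))).
  assert (P2 : u t - M - E / c <= exp (- c * (t - a)) * (u a - M - E / c)).
  { apply Rmult_le_reg_l with (exp (c * (t - a))); auto.
    replace (exp (c * (t - a)) * (exp (- c * (t - a)) * (u a - M - E / c))) with (u a - M - E / c) by (rewrite <- Rmult_assoc, Ex; ring).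
    lra. }
  assert (0 <= exp (- c * (t - a)) * (E / c)) by (apply Rmult_le_pos; [lra| apply Rdiv_le_0_compat; lra]).
  fold E. nra.
Qed.

Lemma osc_step (u rho : R -> R) c h A lam T0 a d : 0 < c -> 0 < h -> 0 <= A -> 0 < lam ->
  (forall t, t <= T0 -> is_derive u t (c * (u (t - h) - u t) + rho t)) ->
  (forall t, t <= T0 -> Rabs (rho t) <= A * exp (lam * t)) ->
  a + h <= T0 ->
  (forall s s', a - h <= s <= a -> a - h <= s' <= a -> u s - u s' <= d) ->
  forall t t', a <= t <= a + h -> a <= t' <= a + h ->
  u t - u t' <= (1 - exp (- c * h)) * d + 2 * (A * exp (lam * (a + h)) / c).
Proof.
  intros Hc Hh HA Hl Hd Hr HaT HD t t' Ht Ht'.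
  assert (Hcont : forall x, a - h <= x <= a -> continuity_pt u x).
  { intros x Hx. apply (cont_of_derive u x _ (Hd x ltac:(lra))). }
  destruct (continuity_ab_maj u (a - h) a ltac:(lra) Hcont) as [s1 [Hs1 Hs1']].
  destruct (continuity_ab_min u (a - h) a ltac:(lra) Hcont) as [s2 [Hs2 Hs2']].
  assert (U1 := win_upper u rho c h A lam T0 a (u s1) t Hc Hh HA Hl Hd Hr HaT Hs1 Ht).
  assert (U2 := win_upper (fun s => - u s) (fun s => - rho s) c h A lam T0 a (- u s2) t' Hc Hh HA Hl).
  simpl in U2.
  assert (U2' : - u t' <= - u s2 - exp (- c * (t' - a)) * (- u s2 - - u a) + A * exp (lam * (a + h)) / c).
  { apply U2; auto.
    - intros s Hs. apply (is_derive_val _ _ (opp (c * (u (s - h) - u s) + rho s))).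
      apply (is_derive_opp u s), Hd; auto. unfold opp; simpl; ring.
    - intros s Hs. rewrite Rabs_Ropp. auto.
    - intros s Hs. specialize (Hs2 s Hs). lra. }
  clear U2.
  assert (Hd12 : u s1 - u s2 <= d) by (apply HD; lra).
  assert (X : 0 <= u s1 - u a) by (assert (T := Hs1 a ltac:(lra)); lra).
  assert (Y : 0 <= u a - u s2) by (assert (T := Hs2 a ltac:(lra)); lra).
  assert (E1 : exp (- c * h) <= exp (- c * (t - a))) by (apply exp_le; nra).
  assert (E2 : exp (- c * h) <= exp (- c * (t' - a))) by (apply exp_le; nra).
  assert (Hch := exp_pos (- c * h)).
  assert (Z : 0 <= (u s1 - u a) + (u a - u s2)) by lra.
  assert (exp (- c * h) * (u s1 - u a) <= exp (- c * (t - a)) * (u s1 - u a)) by (apply Rmult_le_compat_r; auto).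
  assert (exp (- c * h) * (u a - u s2) <= exp (- c * (t' - a)) * (u a - u s2)) by (apply Rmult_le_compat_r; auto).
  assert (exp (- c * h) <= 1) by (rewrite <- exp_0; apply exp_le; nra).
  assert (0 <= d) by lra.
  nra.
Qed.

Lemma nat_above (x : R) : exists n : nat, x <= INR n.
Proof.
  destruct (archimed x) as [Ha _].
  destruct (Rle_dec x 0) as [H|H].
  - exists 0%nat. simpl. lra.
  - apply Rnot_le_lt in H.
    assert (Hz : (0 <= up x)%Z) by (apply le_IZR; lra).
    exists (Z.to_nat (up x)). rewrite INR_IZR_INZ, Z2Nat.id by auto. lra.
Qed.

Lemma osc_conv (u rho : R -> R) c h A lam T0 B : 0 < c -> 0 < h -> 0 <= A -> 0 < lam ->
  (forall t, t <= T0 -> is_derive u t (c * (u (t - h) - u t) + rho t)) ->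
  (forall t, t <= T0 -> Rabs (rho t) <= A * exp (lam * t)) ->
  (forall t, t <= T0 -> 0 <= u t <= B) ->
  exists L0 Kc, 0 <= Kc /\ forall t, t <= T0 -> Rabs (u t - L0) <= Kc * exp (lam * t).
Proof.
  intros Hc Hh HA Hl Hd Hr HB.
  set (th := 1 - exp (- c * h)).
  assert (Hech : 0 < exp (- c * h) < 1).
  { split. apply exp_pos. rewrite <- exp_0. apply exp_increasing. nra. }
  assert (Hth : 0 <= th < 1) by (unfold th; lra).
  set (K1 := 2 * A * exp (lam * h) / c).
  assert (HK1 : 0 <= K1) by (unfold K1; apply Rdiv_le_0_compat; [assert (T := exp_pos (lam * h)); nra|lra]).
  set (E' := K1 / (1 - th)).
  assert (HE' : 0 <= E') by (unfold E'; apply Rdiv_le_0_compat; lra).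
  assert (HE'e : th * E' + K1 = E') by (unfold E'; field; lra).
  assert (I1 : forall n a, a <= T0 -> forall s s', a - h <= s <= a -> a - h <= s' <= a ->
             u s - u s' <= th ^ n * B + E' * exp (lam * a)).
  { induction n.
    - intros a Ha s s' Hs Hs'. simpl.
      assert (T1 := HB s ltac:(lra)). assert (T2 := HB s' ltac:(lra)).
      assert (0 <= E' * exp (lam * a)) by (apply Rmult_le_pos; [lra|apply Rlt_le, exp_pos]). lra.
    - intros a Ha s s' Hs Hs'.
      assert (K := osc_step u rho c h A lam T0 (a - h) (th ^ n * B + E' * exp (lam * (a - h)))
                     Hc Hh HA Hl Hd Hr ltac:(lra) (IHn (a - h) ltac:(lra)) s s'
                     ltac:(lra) ltac:(lra)).
      replace (a - h + h) with a in K by ring. fold th in K.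
      assert (Ex : exp (lam * (a - h)) <= exp (lam * a)) by (apply exp_le; nra).
      assert (E2 : 2 * (A * exp (lam * a) / c) = K1 * exp (lam * (a - h))).
      { unfold K1. replace (lam * a) with (lam * h + lam * (a - h)) by ring. rewrite exp_plus. field. lra. }
      rewrite E2 in K. simpl.
      assert (E' * exp (lam * (a - h)) <= E' * exp (lam * a)) by (apply Rmult_le_compat_l; lra).
      nra. }
  assert (I2 : forall a, a <= T0 -> forall s s', a - h <= s <= a -> a - h <= s' <= a ->
             u s - u s' <= E' * exp (lam * a)).
  { intros a Ha s s' Hs Hs'. apply eps_arg. intros eta He.
    assert (HB0 : 0 <= B) by (assert (T := HB s ltac:(lra)); lra).
    destruct (pow_lt_1_zero th ltac:(rewrite Rabs_pos_eq; lra) (eta / (B + 1)) ltac:(apply Rdiv_lt_0_compat; lra)) as [N HN].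
    specialize (HN N (le_n N)). rewrite Rabs_pos_eq in HN by (apply pow_le; lra).
    assert (K := I1 N a Ha s s' Hs Hs').
    assert (E : th ^ N * (B + 1) < eta).
    { apply Rmult_lt_compat_r with (r := B + 1) in HN; [|lra].
      replace (eta / (B + 1) * (B + 1)) with eta in HN by (field; lra). lra. }
    assert (0 <= th ^ N) by (apply pow_le; lra). nra. }
  set (Kc := E' / (1 - exp (- lam * h))).
  assert (Helh : 0 < exp (- lam * h) < 1).
  { split. apply exp_pos. rewrite <- exp_0. apply exp_increasing. nra. }
  assert (HKc : 0 <= Kc) by (unfold Kc; apply Rdiv_le_0_compat; lra).
  assert (HKcE : E' <= Kc).
  { unfold Kc. apply Rmult_le_reg_r with (1 - exp (- lam * h)). lra.
    replace (E' / (1 - exp (- lam * h)) * (1 - exp (- lam * h))) with E' by (field; lra). nra. }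
  assert (HKcE2 : Kc * exp (- lam * h) + E' = Kc) by (unfold Kc; field; lra).
  assert (I3 : forall n : nat, forall t, t <= T0 -> forall s, t - INR n * h <= s <= t ->
             Rabs (u s - u t) <= Kc * exp (lam * t)).
  { induction n.
    - intros t Ht s Hs. simpl in Hs. replace s with t by lra. rewrite Rminus_diag, Rabs_R0.
      apply Rmult_le_pos; [lra|apply Rlt_le, exp_pos].
    - intros t Ht s Hs. rewrite S_INR in Hs.
      assert (Hp := exp_pos (lam * t)).
      destruct (Rle_dec (t - h) s) as [H1|H1].
      + apply Rabs_le. split.
        * assert (T := I2 t Ht t s ltac:(lra) ltac:(lra)). nra.
        * assert (T := I2 t Ht s t ltac:(lra) ltac:(lra)). nra.
      + apply Rnot_le_lt in H1.
        assert (T1 := IHn (t - h) ltac:(lra) s ltac:(lra)).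
        assert (T2 : Rabs (u (t - h) - u t) <= E' * exp (lam * t)).
        { apply Rabs_le. split.
          - assert (T := I2 t Ht t (t - h) ltac:(lra) ltac:(lra)). lra.
          - apply (I2 t Ht (t - h) t); lra. }
        assert (Ee : exp (lam * (t - h)) = exp (- lam * h) * exp (lam * t)).
        { rewrite <- exp_plus. f_equal. ring. }
        rewrite Ee in T1.
        replace (u s - u t) with ((u s - u (t - h)) + (u (t - h) - u t)) by ring.
        eapply Rle_trans. apply Rabs_triang.
        assert (Z : Kc * exp (lam * t) = Kc * (exp (- lam * h) * exp (lam * t)) + E' * exp (lam * t)) by (rewrite <- HKcE2 at 1; ring).
        lra. }
  assert (I4 : forall s t, s <= t -> t <= T0 -> Rabs (u s - u t) <= Kc * exp (lam * t)).
  { intros s t Hst Ht. destruct (nat_above ((t - s) / h)) as [n Hn].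
    apply (I3 n t Ht s). split; [|lra].
    apply Rmult_le_compat_r with (r := h) in Hn; [|lra].
    replace ((t - s) / h * h) with (t - s) in Hn by (field; lra). lra. }
  set (a := fun n : nat => u (T0 - INR n)).
  assert (Ca : ex_lim_seq_cauchy a).
  { intros eps. destruct eps as [eps Heps]. simpl.
    destruct (exp_small (2 * Kc) eps T0 ltac:(lra) Heps (Rlt_or_le 0 T0) lam Hl) as [s0 [Hs0 Hs0']].
    destruct (nat_above (T0 - s0)) as [N HN].
    exists N. intros n m Hn Hm. unfold a.
    apply le_INR in Hn. apply le_INR in Hm.
    assert (P := pos_INR N).
    assert (T1 := I4 (T0 - INR n) (T0 - INR N) ltac:(lra) ltac:(lra)).
    assert (T2 := I4 (T0 - INR m) (T0 - INR N) ltac:(lra) ltac:(lra)).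
    assert (Ex : exp (lam * (T0 - INR N)) <= exp (lam * s0)) by (apply exp_le; nra).
    replace (u (T0 - INR n) - u (T0 - INR m)) with ((u (T0 - INR n) - u (T0 - INR N)) - (u (T0 - INR m) - u (T0 - INR N))) by ring.
    apply Rabs_le_between in T1. apply Rabs_le_between in T2.
    assert (Kc * exp (lam * (T0 - INR N)) <= Kc * exp (lam * s0)) by (apply Rmult_le_compat_l; lra).
    apply Rabs_def1; lra. }
  apply ex_lim_seq_cauchy_corr in Ca. destruct Ca as [L0 HL0].
  apply is_lim_seq_spec in HL0.
  exists L0, Kc. split; auto.
  intros t Ht. apply eps_arg. intros eta He.
  destruct (HL0 (mkposreal eta He)) as [N1 HN1].
  destruct (nat_above (T0 - t)) as [N2 HN2].
  specialize (HN1 (Nat.max N1 N2) (Nat.le_max_l _ _)). simpl in HN1.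
  assert (Hm : INR N2 <= INR (Nat.max N1 N2)) by (apply le_INR, Nat.le_max_r).
  unfold a in HN1.
  assert (T1 := I4 (T0 - INR (Nat.max N1 N2)) t ltac:(lra) Ht).
  apply Rabs_le_between in T1. apply Rabs_lt_between in HN1.
  apply Rabs_def1; lra.
Qed.

Lemma uw_le_G (h mu : R) (g psi : R -> R) t : 0 < h -> 0 < mu ->
  (forall t, is_derive psi t (- psi t + g (psi (t - h)))) -> (forall t, 0 <= psi t) ->
  uw mu psi t <= Gw h mu psi t.
Proof.
  intros Hh Hmu Hs Hp. unfold Gw.
  assert (0 <= RInt (uw mu psi) (t - h) t).
  { apply RInt_ge_0. lra.
    apply (ex_RInt_continuous (V:=R_CompleteNormedModule)). intros; apply (uw_cont h mu g psi z Hs).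
    intros x _. unfold uw. apply Rmult_le_pos; auto. apply Rlt_le, exp_pos. }
  nra.
Qed.

Lemma apriori (h mu : R) (g psi : R -> R) T0 : 0 < h -> 0 < mu ->
  (forall t, is_derive psi t (- psi t + g (psi (t - h)))) -> (forall t, 0 <= psi t) ->
  (forall t, t <= T0 -> (1 + mu) * exp (mu * h) * psi (t - h) <= g (psi (t - h))) ->
  exists C, forall t, t <= T0 -> psi t <= C * exp (mu * t).
Proof.
  intros Hh Hmu Hs Hp Hg.
  exists (Gw h mu psi T0). intros t Ht.
  assert (M : Gw h mu psi t <= Gw h mu psi T0).
  { apply (mono_inc _ (fun x => exp (- mu * x) * (g (psi (x - h)) - (1 + mu) * exp (mu * h) * psi (x - h)))); auto.
    - intros x _. apply G_derive; auto.
    - intros x Hx. apply Rmult_le_pos. apply Rlt_le, exp_pos. specialize (Hg x ltac:(lra)). lra. }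
  assert (U := uw_le_G h mu g psi t Hh Hmu Hs Hp). unfold uw in U.
  assert (E : psi t = psi t * exp (- mu * t) * exp (mu * t)).
  { rewrite Rmult_assoc, <- exp_plus. replace (- mu * t + mu * t) with 0 by ring. rewrite exp_0. ring. }
  rewrite E. apply Rmult_le_compat_r. apply Rlt_le, exp_pos. lra.
Qed.

Lemma bound_lam (h lam : R) (g psi : R -> R) T0 A al : 0 < h -> 0 < lam -> lam < al -> 0 <= A ->
  (forall t, is_derive psi t (- psi t + g (psi (t - h)))) -> (forall t, 0 <= psi t) ->
  (forall t, t <= T0 -> Rabs (g (psi (t - h)) - (1 + lam) * exp (lam * h) * psi (t - h)) <= A * exp (al * t)) ->
  exists B, forall t, t <= T0 -> psi t * exp (- lam * t) <= B.
Proof.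
  intros Hh Hl Hal HA Hs Hp Hg.
  set (Phi := fun t => Gw h lam psi t + A / (al - lam) * exp ((al - lam) * t)).
  exists (Phi T0). intros t Ht.
  assert (M : Phi t <= Phi T0).
  { apply (mono_inc _ (fun x => exp (- lam * x) * (g (psi (x - h)) - (1 + lam) * exp (lam * h) * psi (x - h))
                               + A / (al - lam) * ((al - lam) * exp ((al - lam) * x)))); auto.
    - intros x _. unfold Phi.
      apply (is_derive_plus (Gw h lam psi) (fun t => A / (al - lam) * exp ((al - lam) * t)) x
               (exp (- lam * x) * (g (psi (x - h)) - (1 + lam) * exp (lam * h) * psi (x - h)))
               (A / (al - lam) * ((al - lam) * exp ((al - lam) * x)))).
      apply G_derive; auto. auto_derive; auto. ring.
    - intros x Hx. specialize (Hg x ltac:(lra)). apply Rabs_le_between in Hg.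
      assert (E : exp (- lam * x) * exp (al * x) = exp ((al - lam) * x)) by (rewrite <- exp_plus; f_equal; ring).
      replace (A / (al - lam) * ((al - lam) * exp ((al - lam) * x))) with (A * exp ((al - lam) * x)) by (field; lra).
      assert (Hp1 := exp_pos (- lam * x)).
      assert (exp (- lam * x) * (- (A * exp (al * x))) <= exp (- lam * x) * (g (psi (x - h)) - (1 + lam) * exp (lam * h) * psi (x - h))) by (apply Rmult_le_compat_l; lra).
      nra. }
  assert (U := uw_le_G h lam g psi t Hh Hl Hs Hp). unfold uw in U.
  unfold Phi in M |- *.
  assert (0 <= A / (al - lam) * exp ((al - lam) * t)) by (apply Rmult_le_pos; [apply Rdiv_le_0_compat; lra|apply Rlt_le, exp_pos]).
  lra.
Qed.

Lemma small_at_minf (psi : R -> R) : is_lim psi m_infty 0 ->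
  forall eps, 0 < eps -> exists T, forall t, t <= T -> Rabs (psi t) < eps.
Proof.
  intros H eps He. apply is_lim_spec in H.
  destruct (H (mkposreal eps He)) as [M HM].
  exists (M - 1). intros t Ht. specialize (HM t ltac:(lra)). simpl in HM.
  rewrite Rminus_0_r in HM. auto.
Qed.

Lemma pos_somewhere (psi : R -> R) K : 0 < K -> is_lim psi p_infty K -> exists t, psi t <> 0.
Proof.
  intros HK H. apply is_lim_spec in H.
  destruct (H (mkposreal K HK)) as [M HM].
  exists (M + 1). specialize (HM (M + 1) ltac:(lra)). simpl in HM.
  intros E. rewrite E in HM. rewrite Rminus_0_l, Rabs_Ropp, Rabs_pos_eq in HM; lra.
Qed.

Lemma front_asym h K p (g dg psi : R -> R) lam L x0 :
  0 < h -> 0 < K -> C1_Rplus_Rplus g dg -> g 0 = 0 -> dg 0 = p -> 1 < p ->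
  is_front h K g psi -> 0 < lam -> lam = -1 + p * exp (- lam * h) ->
  0 < x0 -> (forall x, 0 <= x <= x0 -> Rabs (g x - p * x) <= L * x ^ 2) ->
  exists L0 Kc T, 0 < L0 /\ 0 <= Kc /\
    forall t, t <= T -> Rabs (psi t * exp (- lam * t) - L0) <= Kc * exp (lam * t).
Proof.
  intros Hh HK [Hgd [Hdc [Hq [Hdl Hgp]]]] g0 dg0 Hp [Hs [Hpos [Hm Hpl]]] Hl Hlam Hx0 HL.
  rewrite dg0 in Hq, Hdl.
  assert (Hpe : p = (1 + lam) * exp (lam * h)).
  { assert (E : exp (- lam * h) * exp (lam * h) = 1) by (rewrite <- exp_plus; replace (- lam * h + lam * h) with 0 by ring; apply exp_0).
    replace p with (p * (exp (- lam * h) * exp (lam * h))) by (rewrite E; ring). nra. }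
  assert (HL0 : 0 <= L).
  { specialize (HL x0 ltac:(lra)). assert (T := Rabs_pos (g x0 - p * x0)). assert (0 < x0 ^ 2) by nra.
    destruct (Rle_dec 0 L); auto. nra. }
  set (mu := 3 * lam / 4).
  set (P' := (1 + mu) * exp (mu * h)).
  assert (HP' : P' < p).
  { rewrite Hpe. unfold P'. assert (exp (mu * h) < exp (lam * h)) by (apply exp_increasing; unfold mu; nra).
    assert (T := exp_pos (mu * h)). unfold mu in *. nra. }
  destruct (g_quot g p Hq g0 (p - P') ltac:(lra)) as [d1 [Hd1 Hg1]].
  destruct (small_at_minf psi Hm (Rmin d1 x0) ltac:(apply Rmin_pos; lra)) as [T0 HT0].
  assert (Sm : forall t, t <= T0 -> 0 <= psi t < d1 /\ psi t <= x0).
  { intros t Ht. specialize (HT0 t Ht). rewrite Rabs_pos_eq in HT0 by auto.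
    assert (T1 := Rmin_l d1 x0). assert (T2 := Rmin_r d1 x0). specialize (Hpos t). lra. }
  destruct (apriori h mu g psi T0 Hh ltac:(unfold mu; lra) Hs Hpos) as [C HC].
  { intros t Ht. destruct (Sm (t - h) ltac:(lra)) as [S1 S2]. destruct (Hg1 _ S1). fold P'. lra. }
  assert (HC0 : 0 <= C).
  { specialize (HC T0 (Rle_refl _)). assert (T := exp_pos (mu * T0)). specialize (Hpos T0).
    destruct (Rle_dec 0 C); auto. nra. }
  destruct (bound_lam h lam g psi T0 (L * C ^ 2) (2 * mu) Hh Hl ltac:(unfold mu; lra)
              ltac:(apply Rmult_le_pos; [lra| apply pow2_ge_0]) Hs Hpos) as [B HB].
  { intros t Ht. rewrite <- Hpe.
    destruct (Sm (t - h) ltac:(lra)) as [S1 S2].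
    eapply Rle_trans. apply HL; lra.
    assert (E1 := HC (t - h) ltac:(lra)).
    assert (E2 : psi (t - h) ^ 2 <= (C * exp (mu * (t - h))) ^ 2) by (apply pow_incr; lra).
    assert (E3 : (C * exp (mu * (t - h))) ^ 2 <= C ^ 2 * exp (2 * mu * t)).
    { replace ((C * exp (mu * (t - h))) ^ 2) with (C ^ 2 * exp (2 * mu * (t - h))).
      apply Rmult_le_compat_l. apply pow2_ge_0. apply exp_le. unfold mu; nra.
      simpl. rewrite !Rmult_1_r. replace (2 * mu * (t - h)) with (mu * (t - h) + mu * (t - h)) by ring.
      rewrite exp_plus. ring. }
    apply Rmult_le_compat_l with (r := L) in E2; auto.
    apply Rmult_le_compat_l with (r := L) in E3; auto. nra. }
  assert (HB0 : 0 <= B).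
  { specialize (HB T0 (Rle_refl _)). assert (T := exp_pos (- lam * T0)). specialize (Hpos T0). nra. }
  set (u := fun t => psi t * exp (- lam * t)).
  set (rho := fun t => exp (- lam * t) * (g (psi (t - h)) - p * psi (t - h))).
  assert (Du : forall t, is_derive u t ((1 + lam) * (u (t - h) - u t) + rho t)).
  { intros t. apply (is_derive_val _ _ _ _ (u_derive h lam g psi t Hs)).
    unfold u, rho. rewrite Hpe.
    assert (E : exp (- lam * (t - h)) = exp (- lam * t) * exp (lam * h)) by (rewrite <- exp_plus; f_equal; ring).
    rewrite E. ring. }
  assert (Hrho : forall t, t <= T0 -> Rabs (rho t) <= (L * B ^ 2) * exp (lam * t)).
  { intros t Ht. unfold rho. rewrite Rabs_mult, (Rabs_pos_eq (exp _)) by apply Rlt_le, exp_pos.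
    destruct (Sm (t - h) ltac:(lra)) as [S1 S2].
    assert (E0 := HL (psi (t - h)) ltac:(lra)).
    assert (E1 := HB (t - h) ltac:(lra)).
    assert (E1' : psi (t - h) <= B * exp (lam * (t - h))).
    { replace (psi (t - h)) with (psi (t - h) * exp (- lam * (t - h)) * exp (lam * (t - h))).
      apply Rmult_le_compat_r. apply Rlt_le, exp_pos. auto.
      rewrite Rmult_assoc, <- exp_plus. replace (- lam * (t - h) + lam * (t - h)) with 0 by ring.
      rewrite exp_0; ring. }
    assert (E2 : psi (t - h) ^ 2 <= (B * exp (lam * (t - h))) ^ 2) by (apply pow_incr; lra).
    assert (E3 : exp (- lam * t) * (B * exp (lam * (t - h))) ^ 2 <= B ^ 2 * exp (lam * t)).
    { replace (exp (- lam * t) * (B * exp (lam * (t - h))) ^ 2) with (B ^ 2 * exp (lam * t - 2 * lam * h)).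
      apply Rmult_le_compat_l. apply pow2_ge_0. apply exp_le. nra.
      simpl. rewrite !Rmult_1_r.
      replace (lam * t - 2 * lam * h) with (- lam * t + (lam * (t - h) + lam * (t - h))) by ring.
      rewrite !exp_plus. ring. }
    assert (Hpe2 := exp_pos (- lam * t)).
    apply Rmult_le_compat_l with (r := L) in E2; auto.
    assert (exp (- lam * t) * Rabs (g (psi (t - h)) - p * psi (t - h)) <= exp (- lam * t) * (L * (B * exp (lam * (t - h))) ^ 2)) by (apply Rmult_le_compat_l; lra).
    apply Rmult_le_compat_l with (r := L) in E3; auto. nra. }
  assert (Hu : forall t, t <= T0 -> 0 <= u t <= B).
  { intros t Ht. split. unfold u. apply Rmult_le_pos; auto. apply Rlt_le, exp_pos. apply HB; auto. }
  destruct (osc_conv u rho (1 + lam) h (L * B ^ 2) lam T0 B ltac:(lra) Hh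
              ltac:(apply Rmult_le_pos; [lra|apply pow2_ge_0]) Hl (fun t _ => Du t) Hrho Hu) as [L0 [Kc [HKc Hconv]]].
  exists L0, Kc, T0. split; [|split; auto].
  destruct (Rlt_le_dec 0 L0) as [|HL0n]; auto. exfalso.
  assert (Hsm : forall t, t <= T0 -> psi t <= Kc * exp (2 * lam * t)).
  { intros t Ht. specialize (Hconv t Ht). apply Rabs_le_between in Hconv. unfold u in Hconv.
    replace (psi t) with (psi t * exp (- lam * t) * exp (lam * t)).
    replace (2 * lam * t) with (lam * t + lam * t) by ring. rewrite exp_plus.
    assert (T := exp_pos (lam * t)). nra.
    rewrite Rmult_assoc, <- exp_plus. replace (- lam * t + lam * t) with 0 by ring. rewrite exp_0; ring. }
  set (nu := 3 * lam / 2).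
  set (Pn := (1 + nu) * exp (nu * h)).
  assert (HPn : p < Pn).
  { rewrite Hpe. unfold Pn. assert (exp (lam * h) < exp (nu * h)) by (apply exp_increasing; unfold nu; nra).
    assert (T := exp_pos (lam * h)). unfold nu in *. nra. }
  assert (HPn2 : Pn * exp (- nu * h) = 1 + nu).
  { unfold Pn. rewrite Rmult_assoc, <- exp_plus. replace (nu * h + - nu * h) with 0 by ring. rewrite exp_0; ring. }
  destruct (g_quot g p Hq g0 ((Pn - p) / 2) ltac:(lra)) as [d2 [Hd2 Hg2]].
  destruct (small_at_minf psi Hm d2 Hd2) as [T3 HT3].
  set (T2 := Rmin T0 (Rmin 0 T3)).
  assert (HT2a : T2 <= T0) by apply Rmin_l.
  assert (HT2b : T2 <= 0) by (assert (T := Rmin_r T0 (Rmin 0 T3)); assert (T' := Rmin_l 0 T3); fold T2 in T; lra).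
  assert (HT2c : T2 <= T3) by (assert (T := Rmin_r T0 (Rmin 0 T3)); assert (T' := Rmin_r 0 T3); fold T2 in T; lra).
  assert (Z := small_sol psi (fun t => g (psi (t - h))) h nu (p + (Pn - p) / 2) Kc T2 Hh
                 ltac:(unfold nu; lra) ltac:(lra)).
  assert (Z2 : forall t, t <= T2 -> psi t = 0).
  { apply Z.
    - assert (T := exp_pos (- nu * h)).
      assert ((p + (Pn - p) / 2) * exp (- nu * h) < Pn * exp (- nu * h)) by (apply Rmult_lt_compat_r; lra). lra.
    - intros t _. apply Hs.
    - intros t Ht. specialize (HT3 (t - h) ltac:(lra)). rewrite Rabs_pos_eq in HT3 by auto.
      destruct (Hg2 (psi (t - h)) ltac:(split; auto)) as [_ G2].
      rewrite (Rabs_pos_eq (psi (t - h))) by auto. rewrite Rabs_pos_eq by (apply Hgp; auto). auto.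
    - intros t Ht. rewrite Rabs_pos_eq by auto. eapply Rle_trans. apply Hsm; lra.
      apply Rmult_le_compat_l; auto. apply exp_le. unfold nu; nra. }
  assert (Hz : is_solution h g (fun _ => 0)).
  { intros t. apply (is_derive_val _ _ 0). auto_derive; auto. rewrite g0. ring. }
  assert (All := fwd h g psi (fun _ => 0) T2 Hh Hs Hz Z2).
  destruct (pos_somewhere psi K HK Hpl) as [t1 Ht1]. apply Ht1. apply All.
Qed.

Lemma front_exp h K p (g dg psi : R -> R) lam L x0 :
  0 < h -> 0 < K -> C1_Rplus_Rplus g dg -> g 0 = 0 -> dg 0 = p -> 1 < p ->
  is_front h K g psi -> 0 < lam -> lam = -1 + p * exp (- lam * h) ->
  0 < x0 -> (forall x, 0 <= x <= x0 -> Rabs (g x - p * x) <= L * x ^ 2) ->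
  exists t0 C T, 0 <= C /\ forall t, t <= T ->
    Rabs (psi (t - t0) - exp (lam * t)) <= C * exp (2 * lam * t) /\
    Rabs (Derive psi (t - t0) - lam * exp (lam * t)) <= C * exp (2 * lam * t).
Proof.
  intros Hh HK HC1 g0 dg0 Hp Hf Hl Hlam Hx0 HL.
  destruct (front_asym h K p g dg psi lam L x0 Hh HK HC1 g0 dg0 Hp Hf Hl Hlam Hx0 HL)
    as [L0 [Kc [T [HL0 [HKc Hc]]]]].
  destruct Hf as [Hs [Hpos [Hm Hpl]]].
  assert (Hpe : p * exp (- lam * h) = 1 + lam) by lra.
  assert (HLn : 0 <= L).
  { specialize (HL x0 ltac:(lra)). assert (T' := Rabs_pos (g x0 - p * x0)). assert (0 < x0 ^ 2) by nra.
    destruct (Rle_dec 0 L); auto. nra. }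
  set (t0 := ln L0 / lam).
  assert (Et0 : exp (lam * t0) = L0) by (unfold t0; replace (lam * (ln L0 / lam)) with (ln L0) by (field; lra); apply exp_ln; auto).
  set (C1 := Kc / L0 ^ 2).
  assert (HC1' : 0 <= C1) by (unfold C1; apply Rdiv_le_0_compat; [auto| nra]).
  assert (V : forall t, t - t0 <= T -> Rabs (psi (t - t0) - exp (lam * t)) <= C1 * exp (2 * lam * t)).
  { intros t Ht. specialize (Hc (t - t0) Ht).
    assert (E1 : exp (lam * (t - t0)) = exp (lam * t) / L0).
    { rewrite <- Et0. replace (lam * t) with (lam * (t - t0) + lam * t0) by ring. rewrite exp_plus. field.
      apply Rgt_not_eq, exp_pos. }
    assert (E2 : psi (t - t0) = psi (t - t0) * exp (- lam * (t - t0)) * exp (lam * (t - t0))).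
    { rewrite Rmult_assoc, <- exp_plus. replace (- lam * (t - t0) + lam * (t - t0)) with 0 by ring. rewrite exp_0; ring. }
    set (v := psi (t - t0) * exp (- lam * (t - t0))) in *.
    rewrite E2, E1.
    replace (v * (exp (lam * t) / L0) - exp (lam * t)) with ((v - L0) * exp (lam * t) / L0) by (field; lra).
    rewrite Rabs_div by lra. rewrite Rabs_mult, (Rabs_pos_eq (exp _)) by (apply Rlt_le, exp_pos).
    rewrite (Rabs_pos_eq L0) by lra. rewrite E1 in Hc.
    unfold C1. replace (2 * lam * t) with (lam * t + lam * t) by ring. rewrite exp_plus.
    apply Rmult_le_reg_r with L0; auto.
    replace (Rabs (v - L0) * exp (lam * t) / L0 * L0) with (Rabs (v - L0) * exp (lam * t)) by (field; lra).
    replace (Kc / L0 ^ 2 * (exp (lam * t) * exp (lam * t)) * L0) with (Kc * (exp (lam * t) / L0) * exp (lam * t)) by (field; lra).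
    apply Rmult_le_compat_r; auto. apply Rlt_le, exp_pos. }
  destruct (small_at_minf psi Hm x0 Hx0) as [T1 HT1].
  set (T2 := Rmin (Rmin (T + t0) (T1 + t0)) 0).
  assert (HT2a : T2 <= T + t0) by (unfold T2; assert (A1 := Rmin_l (Rmin (T + t0) (T1 + t0)) 0); assert (A2 := Rmin_l (T + t0) (T1 + t0)); lra).
  assert (HT2b : T2 <= T1 + t0) by (unfold T2; assert (A1 := Rmin_l (Rmin (T + t0) (T1 + t0)) 0); assert (A2 := Rmin_r (T + t0) (T1 + t0)); lra).
  assert (HT2c : T2 <= 0) by (unfold T2; apply Rmin_r).
  exists t0, ((1 + p) * C1 + L * (1 + C1) ^ 2 + C1), T2. split.
  { assert (0 <= L * (1 + C1) ^ 2) by (apply Rmult_le_pos; [auto|apply pow2_ge_0]). nra. }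
  intros t Ht.
  assert (Hex := exp_pos (2 * lam * t)).
  assert (B0 : 0 <= (1 + p) * C1 + L * (1 + C1) ^ 2) by (assert (0 <= L * (1 + C1) ^ 2) by (apply Rmult_le_pos; [auto|apply pow2_ge_0]); nra).
  split.
  { eapply Rle_trans. apply V; lra. nra. }
  assert (Va := V t ltac:(lra)). assert (Vb := V (t - h) ltac:(lra)).
  replace (t - h - t0) with (t - t0 - h) in Vb by ring.
  rewrite (is_derive_unique _ _ _ (Hs (t - t0))).
  assert (Sm : Rabs (psi (t - t0 - h)) < x0) by (apply HT1; lra).
  rewrite Rabs_pos_eq in Sm by auto.
  assert (Q := HL (psi (t - t0 - h)) ltac:(split; [auto|lra])).
  assert (Eh : exp (lam * (t - h)) = exp (- lam * h) * exp (lam * t)) by (rewrite <- exp_plus; f_equal; ring).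
  assert (E2h : exp (2 * lam * (t - h)) <= exp (2 * lam * t)) by (apply exp_le; nra).
  assert (E2l : exp (2 * lam * t) <= exp (lam * t)) by (apply exp_le; nra).
  assert (Hexp1 := exp_pos (lam * t)).
  assert (He1 : exp (- lam * h) <= 1) by (rewrite <- exp_0; apply exp_le; nra).
  assert (Hepos := exp_pos (- lam * h)).
  apply Rabs_le_between in Va. apply Rabs_le_between in Vb. rewrite Eh in Vb.
  assert (Hps : psi (t - t0 - h) <= (1 + C1) * exp (lam * t)).
  { assert (C1 * exp (2 * lam * (t - h)) <= C1 * exp (lam * t)) by (apply Rmult_le_compat_l; lra).
    assert (exp (- lam * h) * exp (lam * t) <= exp (lam * t)) by nra. nra. }
  assert (Hps2 : psi (t - t0 - h) ^ 2 <= (1 + C1) ^ 2 * exp (2 * lam * t)).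
  { replace (2 * lam * t) with (lam * t + lam * t) by ring. rewrite exp_plus.
    replace ((1 + C1) ^ 2 * (exp (lam * t) * exp (lam * t))) with (((1 + C1) * exp (lam * t)) ^ 2) by ring.
    apply pow_incr. split; auto. }
  apply Rabs_le_between in Q.
  assert (L * psi (t - t0 - h) ^ 2 <= L * ((1 + C1) ^ 2 * exp (2 * lam * t))) by (apply Rmult_le_compat_l; auto).
  assert (Hpe2 : p * (exp (- lam * h) * exp (lam * t)) = (1 + lam) * exp (lam * t)) by (rewrite <- Rmult_assoc, Hpe; ring).
  assert (C1 * exp (2 * lam * (t - h)) <= C1 * exp (2 * lam * t)) by (apply Rmult_le_compat_l; lra).
  assert (0 <= C1 * exp (2 * lam * t)) by nra.
  apply Rabs_le. split; nra.
Qed.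

Lemma shift_sol h (g psi : R -> R) c : is_solution h g psi -> is_solution h g (fun t => psi (t + c)).
Proof.
  intros Hs t. assert (E := is_derive_unique _ _ _ (Hs (t + c))).
  apply (is_derive_val _ _ (Derive psi (t + c))).
  auto_derive. eexists; apply Hs.
  change (Derive (fun x : R => psi x) (t + c)) with (Derive psi (t + c)). ring.
  rewrite E. replace (t - h + c) with (t + c - h) by ring. auto.
Qed.

Theorem lemma8 (h K p : R) (g dg psi : R -> R) (lam : R) :
  0 < h -> 0 < K ->
  C1_Rplus_Rplus g dg -> g 0 = 0 -> g K = K -> dg 0 = p -> 1 < p ->
  is_front h K g psi ->
  0 < lam -> lam = -1 + p * exp (- lam * h) ->
  (* part 1: the finite limit g''(0+) exists *)
  ((exists eps d2 q, 0 < eps /\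
      (forall x, 0 < x < eps -> is_derive dg x (d2 x)) /\
      filterlim d2 (at_right 0) (locally q)) ->
    (forall delta, 0 < delta ->
      exists t0 C T, forall t, t <= T ->
        Rabs (psi (t - t0) - exp (lam * t)) <= C * exp ((2 * lam - delta) * t) /\
        Rabs (Derive psi (t - t0) - lam * exp (lam * t))
          <= C * exp ((2 * lam - delta) * t)) /\
    (exists T, forall t, t <= T -> 0 < Derive psi t)) /\
  (* part 2: g'' exists and is bounded on [0, eps) *)
  ((exists eps d2 M, 0 < eps /\
      (forall x, 0 < x < eps -> is_derive dg x (d2 x)) /\
      filterlim (fun x => (dg x - dg 0) / x) (at_right 0) (locally (d2 0)) /\
      (forall x, 0 <= x < eps -> Rabs (d2 x) <= M)) ->
    forall phi, is_front h K g phi -> exists c, forall t, phi t = psi (t + c)).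
Proof.
  intros Hh HK HC1 g0 gK dg0 Hp Hf Hl Hlam.
  pose proof HC1 as [Hgd [Hdc [Hq [Hdl Hgp]]]]. rewrite dg0 in Hq, Hdl.
  split.
  - intros [eps [d2 [q [He [Hd2 Hq2]]]]].
    destruct (at_right_lim _ _ Hq2 1 ltac:(lra)) as [dd [Hdd Hdd2]].
    destruct (g_quad g dg d2 p (Rmin eps dd) (Rabs q + 1) Hgd Hq g0 Hdl ltac:(apply Rmin_pos; lra)) as [x0 [Hx0 HL]].
    { intros x Hx. apply Hd2. assert (T := Rmin_l eps dd). lra. }
    { intros x Hx. assert (T := Rmin_r eps dd). specialize (Hdd2 x ltac:(lra)).
      assert (T2 := Rabs_triang_inv (d2 x) q). assert (T3 := Rabs_pos q). lra. }
    destruct (front_exp h K p g dg psi lam (Rabs q + 1) x0 Hh HK HC1 g0 dg0 Hp Hf Hl Hlam Hx0 HL)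
      as [t0 [C [T [HC Hexp]]]].
    split.
    + intros delta Hd. exists t0, C, (Rmin T 0). intros t Ht.
      assert (Ht1 : t <= T) by (assert (A := Rmin_l T 0); lra).
      assert (Ht2 : t <= 0) by (assert (A := Rmin_r T 0); lra).
      assert (E : C * exp (2 * lam * t) <= C * exp ((2 * lam - delta) * t)) by (apply Rmult_le_compat_l; auto; apply exp_le; nra).
      destruct (Hexp t Ht1). split; lra.
    + destruct (exp_small C lam 0 HC Hl (Rlt_or_le 0 0) lam Hl) as [s [Hs1 Hs2]].
      exists (Rmin T s - t0). intros t Ht.
      assert (Ht1 : t + t0 <= T) by (assert (A := Rmin_l T s); lra).
      assert (Ht2 : t + t0 <= s) by (assert (A := Rmin_r T s); lra).
      destruct (Hexp (t + t0) Ht1) as [_ D]. replace (t + t0 - t0) with t in D by ring.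
      apply Rabs_le_between in D.
      assert (E1 : exp (2 * lam * (t + t0)) = exp (lam * (t + t0)) * exp (lam * (t + t0))) by (rewrite <- exp_plus; f_equal; ring).
      assert (E2 : exp (lam * (t + t0)) <= exp (lam * s)) by (apply exp_le; nra).
      assert (Hpos := exp_pos (lam * (t + t0))).
      assert (C * exp (lam * (t + t0)) < lam) by (assert (C * exp (lam * (t + t0)) <= C * exp (lam * s)) by (apply Rmult_le_compat_l; auto); lra).
      rewrite E1 in D. nra.
  - intros [eps [d2 [M [He [Hd2 [_ HM]]]]]] phi Hphi.
    destruct (g_quad g dg d2 p eps M Hgd Hq g0 Hdl He Hd2) as [x0 [Hx0 HL]].
    { intros x Hx. apply HM; lra. }
    destruct (front_asym h K p g dg psi lam M x0 Hh HK HC1 g0 dg0 Hp Hf Hl Hlam Hx0 HL)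
      as [Lp [Kp [Tp [HLp [HKp Hcp]]]]].
    destruct (front_asym h K p g dg phi lam M x0 Hh HK HC1 g0 dg0 Hp Hphi Hl Hlam Hx0 HL)
      as [Lf [Kf [Tf [HLf [HKf Hcf]]]]].
    destruct Hf as [Hs [Hpos [Hm Hpl]]]. destruct Hphi as [Hsf [Hposf [Hmf Hplf]]].
    set (c := ln (Lf / Lp) / lam).
    assert (Ec : exp (lam * c) = Lf / Lp).
    { unfold c. replace (lam * (ln (Lf / Lp) / lam)) with (ln (Lf / Lp)) by (field; lra).
      apply exp_ln. apply Rdiv_lt_0_compat; lra. }
    exists c.
    set (y := fun t => psi (t + c)).
    assert (Hsy : is_solution h g y) by (apply shift_sol; auto).
    assert (Hpe : p = (1 + lam) * exp (lam * h)).
    { assert (E : exp (- lam * h) * exp (lam * h) = 1) by (rewrite <- exp_plus; replace (- lam * h + lam * h) with 0 by ring; apply exp_0).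
      replace p with (p * (exp (- lam * h) * exp (lam * h))) by (rewrite E; ring). nra. }
    set (nu := 3 * lam / 2).
    set (Pn := (1 + nu) * exp (nu * h)).
    assert (HPn : p < Pn).
    { rewrite Hpe. unfold Pn. assert (exp (lam * h) < exp (nu * h)) by (apply exp_increasing; unfold nu; nra).
      assert (T := exp_pos (lam * h)). unfold nu in *. nra. }
    assert (HPn2 : Pn * exp (- nu * h) = 1 + nu).
    { unfold Pn. rewrite Rmult_assoc, <- exp_plus. replace (nu * h + - nu * h) with 0 by ring. rewrite exp_0; ring. }
    destruct (g_lip g dg p Hgd Hq g0 Hdl ltac:(lra) ((Pn - p) / 2) ltac:(lra)) as [d [Hd Hlip]].
    destruct (small_at_minf psi Hm d Hd) as [T3 HT3].
    destruct (small_at_minf phi Hmf d Hd) as [T4 HT4].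
    set (S := Kf + exp (2 * lam * c) * Kp).
    assert (HS : 0 <= S) by (unfold S; assert (T := exp_pos (2 * lam * c)); nra).
    set (T2 := Rmin (Rmin Tf (Tp - c)) (Rmin 0 (Rmin (T3 - c) T4))).
    assert (HT2 : T2 <= Tf /\ T2 <= Tp - c /\ T2 <= 0 /\ T2 <= T3 - c /\ T2 <= T4).
    { unfold T2. assert (A1 := Rmin_l (Rmin Tf (Tp - c)) (Rmin 0 (Rmin (T3 - c) T4))).
      assert (A2 := Rmin_r (Rmin Tf (Tp - c)) (Rmin 0 (Rmin (T3 - c) T4))).
      assert (A3 := Rmin_l Tf (Tp - c)). assert (A4 := Rmin_r Tf (Tp - c)).
      assert (A5 := Rmin_l 0 (Rmin (T3 - c) T4)). assert (A6 := Rmin_r 0 (Rmin (T3 - c) T4)).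
      assert (A7 := Rmin_l (T3 - c) T4). assert (A8 := Rmin_r (T3 - c) T4). lra. }
    destruct HT2 as [HT2a [HT2b [HT2c [HT2d HT2e]]]].
    assert (W : forall t, t <= T2 -> phi t - y t = 0).
    { apply (small_sol (fun t => phi t - y t) (fun t => g (phi (t - h)) - g (y (t - h))) h nu
               (p + (Pn - p) / 2) S T2 Hh ltac:(unfold nu; lra) ltac:(lra)).
      - assert (T := exp_pos (- nu * h)).
        assert ((p + (Pn - p) / 2) * exp (- nu * h) < Pn * exp (- nu * h)) by (apply Rmult_lt_compat_r; lra). lra.
      - intros t _. apply (is_derive_val _ _ ((- phi t + g (phi (t - h))) - (- y t + g (y (t - h))))).
        apply (is_derive_minus phi y t). apply Hsf. apply Hsy. ring.
      - intros t Ht.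
        assert (A := HT4 (t - h) ltac:(lra)). assert (B := HT3 (t - h + c) ltac:(lra)).
        rewrite Rabs_pos_eq in A by auto. rewrite Rabs_pos_eq in B by auto.
        apply Hlip; unfold y; split; auto; lra.
      - intros t Ht.
        assert (A := Hcf t ltac:(lra)). assert (B := Hcp (t + c) ltac:(lra)).
        assert (Ey : y t * exp (- lam * t) = exp (lam * c) * (psi (t + c) * exp (- lam * (t + c)))).
        { unfold y. rewrite <- Rmult_assoc, (Rmult_comm (exp (lam * c))), Rmult_assoc, <- exp_plus. f_equal. f_equal. ring. }
        assert (Hec := exp_pos (lam * c)).
        assert (B' : Rabs (y t * exp (- lam * t) - Lf) <= exp (lam * c) * (Kp * exp (lam * (t + c)))).
        { rewrite Ey. replace Lf with (exp (lam * c) * Lp) by (rewrite Ec; field; lra).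
          rewrite <- Rmult_minus_distr_l, Rabs_mult, Rabs_pos_eq by lra.
          apply Rmult_le_compat_l; lra. }
        assert (Ek : exp (lam * c) * (Kp * exp (lam * (t + c))) = exp (2 * lam * c) * Kp * exp (lam * t)).
        { replace (lam * (t + c)) with (lam * c + lam * t) by ring. rewrite exp_plus.
          replace (2 * lam * c) with (lam * c + lam * c) by ring. rewrite exp_plus. ring. }
        rewrite Ek in B'.
        assert (Wt : Rabs ((phi t - y t) * exp (- lam * t)) <= S * exp (lam * t)).
        { replace ((phi t - y t) * exp (- lam * t)) with ((phi t * exp (- lam * t) - Lf) - (y t * exp (- lam * t) - Lf)) by ring.
          eapply Rle_trans. apply Rabs_triang. rewrite Rabs_Ropp. unfold S. lra. }
        rewrite Rabs_mult, (Rabs_pos_eq (exp _)) in Wt by (apply Rlt_le, exp_pos).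
        assert (Ee : exp (- lam * t) * exp (lam * t) = 1) by (rewrite <- exp_plus; replace (- lam * t + lam * t) with 0 by ring; apply exp_0).
        assert (Hel := exp_pos (lam * t)).
        assert (W2 : Rabs (phi t - y t) <= S * exp (lam * t) * exp (lam * t)).
        { replace (Rabs (phi t - y t)) with (Rabs (phi t - y t) * exp (- lam * t) * exp (lam * t)) by (rewrite Rmult_assoc, Ee; ring).
          apply Rmult_le_compat_r; lra. }
        eapply Rle_trans. apply W2. rewrite Rmult_assoc, <- exp_plus.
        apply Rmult_le_compat_l; auto. apply exp_le. unfold nu; nra. }
    intros t. apply (fwd h g phi y T2 Hh Hsf Hsy).
    { intros s Hs'. specialize (W s Hs'). lra. }
Qed.
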